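(* In the Core Tuplix Calculus $\mathbf{CTC}$ over a nonempty attribute set $A$ and a non-trivial cancellation meadow $\mathcal{D}$ (defined in the context), for all data terms $p$ and $q$: if $\mathcal{D}\models (1-p/p)\cdot q=0$, then $\mathbf{CTC}\vdash \gamma(p)=\gamma(p)\oplus\gamma(q)$.
   Context: Data: a meadow is a commutative ring with unit with a total unary operation $(\cdot)^{-1}$ satisfying $(u^{-1})^{-1}=u$ and $u\cdot(u\cdot u^{-1})=u$; a non-trivial cancellation meadow additionally satisfies $0\neq 1$ and the cancellation law ($u\neq 0$ and $uv=uw$ imply $v=w$). Fix such a structure $\mathcal{D}$. Data terms are built from data variables ($u,v,w,\dots$), constants $0,1$, binary $+,\cdot$ and unary $-$, $(\cdot)^{-1}$; write $p/q$ for $p\cdot q^{-1}$ and $p-q$ for $p+(-q)$; $\mathcal{D}\models p=q$ means the identity holds for all valuations of the data variables in $\mathcal{D}$. Fix a nonempty set $A$ of attributes. Tuplix terms are built from tuplix variables, constants $\epsilon$ and $\delta$, entries $a(p)$ ($a\in A$, $p$ a data term), zero tests $\gamma(p)$, and the binary operator $\oplus$. $\mathbf{CTC}$ is the two-sorted equational proof system with axioms (T1) $x\oplus y=y\oplus x$; (T2) $(x\oplus y)\oplus z=x\oplus(y\oplus z)$; (T3) $x\oplus\epsilon=x$; (T4) $x\oplus\delta=\delta$; (T5) $a(u)\oplus a(v)=a(u+v)$; (T6) $\gamma(u)=\gamma(u/u)$; (T7) $\gamma(0)=\epsilon$; (T8) $\gamma(1)=\delta$; (T9) $\gamma(u)\oplus\gamma(v)=\gamma(u/u+v/v)$;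 (T10) $\gamma(u-v)\oplus a(u)=\gamma(u-v)\oplus a(v)$ (for all $a\in A$), together with the rule (DE): for all data terms $p,q$, if $\mathcal{D}\models p=q$ then $\gamma(p)=\gamma(q)$ is derivable. *)

(* Defs.v *)
From HB Require Import structures.
From mathcomp Require Import all_boot all_algebra.
Set Implicit Arguments. Unset Strict Implicit. Unset Printing Implicit Defensive.
Import GRing.Theory.
Local Open Scope ring_scope.

Definition is_meadow (D : comPzRingType) (inv : D -> D) : Prop :=
  (forall u : D, inv (inv u) = u) /\ (forall u : D, u * (u * inv u) = u).

Definition is_nt_cancellation_meadow (D : comPzRingType) (inv : D -> D) : Prop :=
  is_meadow inv /\ (0 : D) <> 1 /\
  (forall u v w : D, u <> 0 -> u * v = u * w -> v = w).

Inductive dterm : Type :=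
| dvar : nat -> dterm
| dzero : dterm
| done : dterm
| dadd : dterm -> dterm -> dterm
| dmul : dterm -> dterm -> dterm
| dopp : dterm -> dterm
| dinv : dterm -> dterm.

Definition ddiv (p q : dterm) : dterm := dmul p (dinv q).
Definition dsub (p q : dterm) : dterm := dadd p (dopp q).

Fixpoint deval (D : comPzRingType) (inv : D -> D) (rho : nat -> D) (p : dterm) : D :=
  match p with
  | dvar n => rho n
  | dzero => 0
  | done => 1
  | dadd p q => deval inv rho p + deval inv rho q
  | dmul p q => deval inv rho p * deval inv rho q
  | dopp p => - deval inv rho p
  | dinv p => inv (deval inv rho p)
  end.

Definition dmodels (D : comPzRingType) (inv : D -> D) (p q : dterm) : Prop :=
  forall rho : nat -> D, deval inv rho p = deval inv rho q.

Inductive tterm (A : Type) : Type :=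
| tvar : nat -> tterm A
| teps : tterm A
| tdelta : tterm A
| tentry : A -> dterm -> tterm A
| tgamma : dterm -> tterm A
| toplus : tterm A -> tterm A -> tterm A.
Arguments teps {A}.
Arguments tdelta {A}.
Arguments tvar {A}.
Arguments tgamma {A}.

Inductive ctc (D : comPzRingType) (inv : D -> D) (A : Type) :
    tterm A -> tterm A -> Prop :=
| ctc_refl x : ctc inv x x
| ctc_sym x y : ctc inv x y -> ctc inv y x
| ctc_trans x y z : ctc inv x y -> ctc inv y z -> ctc inv x z
| ctc_cong x x' y y' : ctc inv x x' -> ctc inv y y' ->
    ctc inv (toplus x y) (toplus x' y')
| T1 x y : ctc inv (toplus x y) (toplus y x)
| T2 x y z : ctc inv (toplus (toplus x y) z) (toplus x (toplus y z))
| T3 x : ctc inv (toplus x teps) x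
| T4 x : ctc inv (toplus x tdelta) tdelta
| T5 (a : A) u v : ctc inv (toplus (tentry a u) (tentry a v)) (tentry a (dadd u v))
| T6 u : ctc inv (tgamma u) (tgamma (ddiv u u))
| T7 : ctc inv (tgamma dzero) teps
| T8 : ctc inv (tgamma done) tdelta
| T9 u v : ctc inv (toplus (tgamma u) (tgamma v))
                   (tgamma (dadd (ddiv u u) (ddiv v v)))
| T10 (a : A) u v : ctc inv (toplus (tgamma (dsub u v)) (tentry a u))
                           (toplus (tgamma (dsub u v)) (tentry a v))
| DE p q : dmodels inv p q -> ctc inv (tgamma p) (tgamma q).

(* Main.v *)
Require Import Defs.
From mathcomp Require Import all_boot all_algebra.
Import GRing.Theory.
Local Open Scope ring_scope.

Lemma mvinv {D : comPzRingType} {inv : D -> D} {u : D} :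
  is_nt_cancellation_meadow inv -> u <> 0 -> u * inv u = 1.
Proof.
move=> [[_ H2] [_ Hc]] Hu; apply: (Hc u) => //; by rewrite H2 mulr1.
Qed.

Lemma ctc_all {D : comPzRingType} {inv : D -> D} {A : Type} (x : tterm A) :
  ctc inv (teps : tterm A) tdelta -> ctc inv x tdelta.
Proof.
move=> H.
apply: ctc_trans (ctc_sym (T3 inv x)) _.
apply: ctc_trans (T4 inv x).
apply: ctc_cong => //; exact: ctc_refl.
Qed.

Theorem lemma2 (D : comPzRingType) (inv : D -> D) (A : Type)
  (HD : is_nt_cancellation_meadow inv) (HA : inhabited A) (p q : dterm) :
  dmodels inv (dmul (dsub done (ddiv p p)) q) dzero ->
  ctc inv (tgamma p : tterm A) (toplus (tgamma p) (tgamma q)).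
Proof.
move=> Hpq.
have H10 : (1 : D) <> 0 by case: HD => _ [H _] /esym.
have [H2|H2] := eqVneq (1 + 1 : D) 0.
  have Hed : ctc inv (teps : tterm A) tdelta.
    apply: (ctc_trans (ctc_sym (T7 inv A))).
    apply: (ctc_trans _ (T4 inv (tdelta : tterm A))).
    apply: (ctc_trans _ (ctc_cong (T8 inv A) (T8 inv A))).
    apply: (ctc_trans _ (ctc_sym (T9 inv A done done))).
    apply: DE => rho /=.
    by rewrite mvinv.
  apply: (ctc_trans (ctc_all _ Hed)).
  apply: ctc_sym; exact: ctc_all.
apply: (ctc_trans (T6 inv A p)).
apply: ctc_sym.
apply: (ctc_trans (T9 inv A p q)).
apply: (ctc_trans (T6 inv A _)).
apply: DE => rho /=.
have := Hpq rho; rewrite /= => H.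
set a := deval inv rho p in H *; set b := deval inv rho q in H *.
have [a0|a0] := eqVneq a 0.
  move: H; rewrite a0 mul0r subr0 mul1r => H; rewrite H.
  by rewrite !(mul0r, add0r).
have a0' : a <> 0 by apply/eqP.
rewrite (mvinv HD a0').
have [b0|b0] := eqVneq b 0.
  by rewrite b0 mul0r addr0 mvinv.
have b0' : b <> 0 by apply/eqP.
by rewrite (mvinv HD b0') mvinv //; apply/eqP.
Qed.
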